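(* Let $n$ be odd, $M$ an $n\times n$ HW-matrix and $S\in\mathcal P_n$. (1) If $S$ is an almost spin$^c$ set for $M$, then $|S|\equiv\frac{n-1}{2}\pmod 2$. (2) If $S$ is an almost spin$^c$ set for $M$, then $S$ is a spin$^c$ set for $M$.
   Context: $\mathcal S=\{0,1,2,3\}$ is the Klein four-group ($\mathbb Z_2$-vector space) with $x+x=0$, $1+2=3$, $1+3=2$, $2+3=1$. $\mathcal P_n$ is the power set of $\{1,\dots,n\}$ as a $\mathbb Z_2$-algebra (addition = symmetric difference, product = intersection); $|U|_2=|U|\bmod 2$. For $M\in\mathcal S^{n\times n}$ and $U\in\mathcal P_n$, $J_M(U)=\{j:\sum_{i\in U}M_{ij}=1\}$. $M$ is distinguished if it has $1$ on the diagonal and $2$ or $3$ off the diagonal; $M$ is an HW-matrix if it is distinguished, every column sum is $0$, and $J_M(U)\neq\emptyset$ for every $U\ne\emptyset,\{1,\dots,n\}$. $S\in\mathcal P_n$ is a spin$^c$ set for $M$ if $|(J_M(U)+U)\cap S|_2=\binom{|U|}{2}\bmod2$ for every $U\in\mathcal P_n$; it is an almost spin$^c$ set if this holds for every $U\subseteq\{1,\dots,n-1\}$. *)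

(* Defs.v *)
From HB Require Import structures.
From mathcomp Require Import all_boot all_order.
Set Implicit Arguments. Unset Strict Implicit. Unset Printing Implicit Defensive.

(* The Klein four-group S = {0,1,2,3} with 1+2=3, 1+3=2, 2+3=1, x+x=0. *)
Inductive K4 := K0 | K1 | K2 | K3.

Definition K4_eqb (x y : K4) : bool :=
  match x, y with
  | K0, K0 | K1, K1 | K2, K2 | K3, K3 => true
  | _, _ => false end.
Lemma K4_eqP : Equality.axiom K4_eqb.
Proof. by case; case; constructor. Qed.
HB.instance Definition _ := hasDecEq.Build K4 K4_eqP.

Definition K4_add (x y : K4) : K4 :=
  match x, y with
  | K0, z | z, K0 => z
  | K1, K1 | K2, K2 | K3, K3 => K0
  | K1, K2 | K2, K1 => K3
  | K1, K3 | K3, K1 => K2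
  | K2, K3 | K3, K2 => K1
  end.

(* Indices {1,...,n} are represented by 'I_n = {0,...,n-1}; subsets of
   {1..n} (elements of P_n) by {set 'I_n}; matrices over S by functions
   'I_n -> 'I_n -> K4 (M i j = entry in row i, column j). *)
Definition kmatrix (n : nat) := 'I_n -> 'I_n -> K4.

Definition colsum n (M : kmatrix n) (U : {set 'I_n}) (j : 'I_n) : K4 :=
  \big[K4_add/K0]_(i in U) M i j.

Definition JM n (M : kmatrix n) (U : {set 'I_n}) : {set 'I_n} :=
  [set j | colsum M U j == K1].

Definition distinguished n (M : kmatrix n) : Prop :=
  forall i j, (i = j -> M i j = K1) /\ (i <> j -> M i j = K2 \/ M i j = K3).

Definition HW_matrix n (M : kmatrix n) : Prop :=
  distinguished M /\
  (forall j, colsum M setT j = K0) /\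
  (forall U : {set 'I_n}, U <> set0 -> U <> setT -> JM M U <> set0).

(* symmetric difference = addition in P_n *)
Definition symdiff n (A B : {set 'I_n}) : {set 'I_n} := (A :\: B) :|: (B :\: A).

Definition spinc_cond n (M : kmatrix n) (S U : {set 'I_n}) : Prop :=
  odd #|symdiff (JM M U) U :&: S| = odd 'C(#|U|, 2).

Definition spinc_set n (M : kmatrix n) (S : {set 'I_n}) : Prop :=
  forall U : {set 'I_n}, spinc_cond M S U.

(* U subset of {1,...,n-1}, i.e. U avoids the last index (n-1 in 'I_n) *)
Definition almost_spinc_set n (M : kmatrix n) (S : {set 'I_n}) : Prop :=
  forall U : {set 'I_n}, (forall i, i \in U -> (i < n.-1)%N) -> spinc_cond M S U.

(* Main.v *)
From HB Require Import structures.
Require Import Defs.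
From mathcomp Require Import all_boot all_order.
From mathcomp Require Import zify.

Set Implicit Arguments. Unset Strict Implicit. Unset Printing Implicit Defensive.

Lemma K4_addA : associative K4_add. Proof. by do 3 case. Qed.
Lemma K4_addC : commutative K4_add. Proof. by do 2 case. Qed.
Lemma K4_add0 : left_id K0 K4_add. Proof. by case. Qed.
HB.instance Definition _ := Monoid.isComLaw.Build K4 K0 K4_add K4_addA K4_addC K4_add0.

Lemma colsumC n (M : kmatrix n) U j :
  colsum M setT j = K0 -> colsum M (~: U) j = colsum M U j.
Proof.
rewrite /colsum (bigID (mem U)) /=.
have -> : \big[K4_add/K0]_(i in [set: 'I_n] | i \in U) M i j =
          \big[K4_add/K0]_(i in U) M i j by apply: eq_bigl => i; rewrite in_setT.
have -> : \big[K4_add/K0]_(i in [set: 'I_n] | i \notin U) M i j =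
          \big[K4_add/K0]_(i in ~: U) M i j by apply: eq_bigl => i; rewrite in_setT in_setC.
by case: (\big[_/_]_(i in U) _); case: (\big[_/_]_(i in ~: U) _).
Qed.

Lemma JMC n (M : kmatrix n) U :
  (forall j, colsum M setT j = K0) -> JM M (~: U) = JM M U.
Proof. by move=> H; apply/setP => j; rewrite !inE colsumC. Qed.

Lemma symdiffC n (J U : {set 'I_n}) : symdiff J (~: U) = ~: symdiff J U.
Proof.
apply/setP => j; rewrite !inE.
by case: (j \in J); case: (j \in U).
Qed.

Lemma card_split n (X S : {set 'I_n}) :
  odd #|X :&: S| (+) odd #|~: X :&: S| = odd #|S|.
Proof.
rewrite -(cardsID X S) oddD setIC; congr (_ (+) odd #|_|).
by rewrite setDE setIC.
Qed.

Lemma binD a b : 'C(a + b, 2) = 'C(a, 2) + a * b + 'C(b, 2).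
Proof.
elim: b => [|b IH]; first by rewrite addn0 muln0 addn0 /= addn0.
 
rewrite addnS binS IH bin1 binS bin1.
rewrite mulnS; lia.
Qed.

Lemma bin_par N k : odd N.+1 -> k <= N.+1 ->
  odd 'C(k, 2) (+) odd 'C(N.+1 - k, 2) = odd (N./2).
Proof.
move=> Ho Hk.
have E : N.+1 = k + (N.+1 - k) by rewrite subnKC.
move: (N.+1 - k) E => m E.
have H := binD k m; rewrite -E in H.
have : odd 'C(N.+1, 2) = odd (N./2).
  by rewrite bin2odd // oddM Ho.
rewrite H !oddD oddM.
have Hkm : odd k && odd m = false.
  move: Ho; rewrite E oddD.
  by case: (odd k); case: (odd m).
rewrite Hkm.
by case: (odd 'C(k,2)); case: (odd 'C(m, 2)).
Qed.

Definition fval n (M : kmatrix n) (S U : {set 'I_n}) : bool :=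
  odd #|symdiff (JM M U) U :&: S| (+) odd 'C(#|U|, 2).

Lemma fvalP n (M : kmatrix n) S U : spinc_cond M S U <-> fval M S U = false.
Proof.
rewrite /spinc_cond /fval.
by case: (odd _); case: (odd _); split.
Qed.

Lemma fvalC N (M : kmatrix N.+1) S U :
  odd N.+1 -> (forall j, colsum M setT j = K0) ->
  fval M S U (+) fval M S (~: U) = odd #|S| (+) odd (N./2).
Proof.
move=> Ho Hc.
rewrite /fval JMC // symdiffC.
have Hk : #|~: U| = N.+1 - #|U|.
  by have := cardsC U; rewrite card_ord; lia.
have HU : #|U| <= N.+1 by have := max_card U; rewrite card_ord.
rewrite Hk -(bin_par Ho HU) -(card_split (symdiff (JM M U) U) S).
set a := odd _; set b := odd _; set c := odd _; set d := odd _.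
by case: a; case: b; case: c; case: d.
Qed.

Theorem mainTheorem8 (n : nat) (M : kmatrix n) (S : {set 'I_n}) :
  odd n -> HW_matrix M ->
  (almost_spinc_set M S -> odd #|S| = odd (n.-1./2)) /\
  (almost_spinc_set M S -> spinc_set M S).
Proof.
case: n M S => [//|N] M S Ho [Hd [Hc _]].
have Hsing : fval M S [set ord_max] = false.
  rewrite /fval cards1 /=.
  have -> : JM M [set ord_max] = [set ord_max].
    apply/setP => j; rewrite !inE /colsum big_set1.
    case: (eqVneq j ord_max) => [->|ne].
      by rewrite (proj1 (Hd _ _)).
    have [_ H] := Hd ord_max j.
    have : ord_max <> j by move=> E; rewrite E eqxx in ne.
    by move/H => [->|->].
  have -> : symdiff [set ord_max] [set ord_max] = set0 :> {set 'I_N.+1}.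
    by apply/setP => j; rewrite !inE; case: (_ == _).
  by rewrite set0I cards0.
have Cmax : forall U : {set 'I_N.+1}, ord_max \in U ->
    forall i, i \in ~: U -> (i < N.+1.-1)%N.
  move=> U HU i; rewrite inE => Hi /=.
  have := ltn_ord i; rewrite ltnS leq_eqVlt => /orP [/eqP E|//].
  have : i = ord_max by apply: val_inj.
  by move=> Ei; rewrite Ei HU in Hi.
have part1 : almost_spinc_set M S -> odd #|S| = odd (N./2).
  move=> Ha.
  have H1 := fvalC S [set ord_max] Ho Hc.
  have H2 : fval M S (~: [set ord_max]) = false.
    by apply/fvalP; apply: Ha; apply: Cmax; rewrite inE.
  move: H1; rewrite Hsing H2 /=.
  by case: (odd _); case: (odd _).
split => //.
move=> Ha U; apply/fvalP.
case: (boolP (ord_max \in U)) => HU.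
  have H1 := fvalC S U Ho Hc.
  have H2 : fval M S (~: U) = false by apply/fvalP; apply: Ha; apply: Cmax.
  move: H1; rewrite H2 (part1 Ha) addbb addbF //.
apply/fvalP; apply: Ha => i Hi /=.
have := ltn_ord i; rewrite ltnS leq_eqVlt => /orP [/eqP E|//].
have Ei : i = ord_max by apply: val_inj.
by rewrite -Ei Hi in HU.
Qed.
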